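(* Let $\mathfrak{C}$ be a clustering functor on $\mathcal{M}^{inj}$ that is scale invariant: for every finite metric space $(X,d_X)$ and every $\lambda>0$, $\mathfrak{C}(X,\lambda\cdot d_X)=\mathfrak{C}(X,d_X)$. Let $K(\mathfrak{C})=\{k\geq2:\mathfrak{C}(\Delta_k(1))\text{ consists of one block}\}$. If $K(\mathfrak{C})=\emptyset$, then $\mathfrak{C}$ assigns to each finite metric space its partition into singletons. Otherwise, letting $k_{\mathfrak{C}}=\min K(\mathfrak{C})$: for each $k\geq k_{\mathfrak{C}}$, $\mathfrak{C}$ assigns to each $X\in\mathcal{M}_k$ the partition of $X$ with only one block, and for each $2\leq k<k_{\mathfrak{C}}$, $\mathfrak{C}$ assigns to each $X\in\mathcal{M}_k$ the partition of $X$ into $k$ singletons.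
   Context: $\mathcal{M}^{inj}$ is the category whose objects are finite metric spaces and whose morphisms $f:(X,d_X)\to(Y,d_Y)$ are injective distance non-increasing maps. For a set map $f:X\to Y$ and a partition $P_Y$ of $Y$, $f^*(P_Y)$ is the partition of $X$ with blocks the nonempty sets $f^{-1}(B)$, $B\in P_Y$. A clustering functor on $\mathcal{M}^{inj}$ is a rule $\mathfrak{C}$ assigning to every finite metric space $(X,d_X)$ a partition $\mathfrak{C}(X,d_X)$ of $X$ such that for every morphism $f:X\to Y$, $\mathfrak{C}(X)$ refines $f^*(\mathfrak{C}(Y))$. For $k\geq2$ and $\delta>0$, $\Delta_k(\delta)$ is the metric space with $k$ points all of whose pairwise distances equal $\delta$. $\mathcal{M}_k$ denotes the collection of finite metric spaces with exactly $k$ points. *)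

(* Defs.v *)
From HB Require Import structures.
From mathcomp Require Import all_boot all_order all_algebra.
From mathcomp Require Import reals.
Set Implicit Arguments. Unset Strict Implicit. Unset Printing Implicit Defensive.
Import Order.TTheory GRing.Theory Num.Theory.
Local Open Scope ring_scope.

Definition is_metric (R : realType) (T : finType) (d : T -> T -> R) : Prop :=
  [/\ forall x y, 0 <= d x y,
      forall x y, d x y = 0 <-> x = y,
      forall x y, d x y = d y x &
      forall x y z, d x z <= d x y + d y z].

Definition inj_morphism (R : realType) (X Y : finType)
  (dX : X -> X -> R) (dY : Y -> Y -> R) (f : X -> Y) : Prop :=
  injective f /\ forall x x', dY (f x) (f x') <= dX x x'.

Definition pullback_part (X Y : finType) (f : X -> Y) (PY : {set {set Y}})
  : {set {set X}} :=
  [set f @^-1: B | B : {set Y} in PY] :\ set0.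

Definition refines (X : finType) (P Q : {set {set X}}) : Prop :=
  forall A, A \in P -> exists2 B, B \in Q & A \subset B.

Definition clustering_rule (R : realType) :=
  forall (T : finType), (T -> T -> R) -> {set {set T}}.

Definition clustering_functor (R : realType) (C : clustering_rule R) : Prop :=
  (forall (T : finType) (d : T -> T -> R), is_metric d -> partition (C T d) [set: T])
  /\ (forall (X Y : finType) (dX : X -> X -> R) (dY : Y -> Y -> R) (f : X -> Y),
        is_metric dX -> is_metric dY -> inj_morphism dX dY f ->
        refines (C X dX) (pullback_part f (C Y dY))).

Definition scale_invariant (R : realType) (C : clustering_rule R) : Prop :=
  forall (T : finType) (d : T -> T -> R) (l : R), is_metric d -> 0 < l ->
    C T (fun x y => l * d x y) = C T d.

Definition Delta (R : realType) (k : nat) (delta : R) : 'I_k -> 'I_k -> R :=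
  fun x y => if x == y then 0 else delta.

Definition inK (R : realType) (C : clustering_rule R) (k : nat) : Prop :=
  (2 <= k)%N /\ C 'I_k (@Delta R k 1) = [set [set: 'I_k]].

Definition singletons_part (T : finType) : {set {set T}} := [set [set x] | x in T].
Definition one_block_part (T : finType) : {set {set T}} := [set [set: T]].

(* Main.v *)
Require Import Defs.
From HB Require Import structures.
From mathcomp Require Import all_boot all_order all_algebra all_fingroup.
From mathcomp Require Import reals.
Set Implicit Arguments. Unset Strict Implicit. Unset Printing Implicit Defensive.
Import Order.TTheory GRing.Theory Num.Theory.

Section Helpers.
Local Open Scope ring_scope.
Variable R : realType.

Lemma metric_Delta n : is_metric (@Delta R n 1).
Proof.
rewrite /Delta; split => [x y|x y|x y|x y z].
- by case: (x == y); rewrite ?lexx ?ler01.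
- split=> [|->]; last by rewrite eqxx.
  by case: eqP => // _ /eqP; rewrite oner_eq0.
- by rewrite eq_sym.
- case: (x =P z) => [_|nxz].
  + by case: (x == y); case: (y == z); rewrite ?addr_ge0 ?ler01 ?lexx.
  case: (x =P y) => [exy|nxy].
  + subst y; rewrite add0r; case: (x =P z) => //.
  + case: (y == z); rewrite ?addr0 ?lexx //.
    by rewrite lerDl ler01.
Qed.

Lemma metric_scale (T : finType) (d : T -> T -> R) l :
  is_metric d -> 0 < l -> is_metric (fun x y => l * d x y).
Proof.
case=> h0 h1 h2 h3 lp; split => [x y|x y|x y|x y z].
- by rewrite mulr_ge0 // ltW.
- rewrite -h1; split => [/eqP|->]; rewrite ?mulr0 // mulf_eq0 gt_eqF //=.
  by move/eqP.
- by rewrite h2.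
- by rewrite -mulrDr ler_wpM2l // ltW.
Qed.

Lemma seq_lb (s : seq R) : (forall x, x \in s -> 0 < x) ->
  exists2 l, 0 < l & forall x, x \in s -> l <= x.
Proof.
elim: s => [|a s IH] H; first by exists 1 => //; rewrite ltr01.
have [l lp Hl] : exists2 l, 0 < l & forall x, x \in s -> l <= x.
  by apply: IH => x xs; apply: H; rewrite in_cons xs orbT.
exists (Order.min a l).
  by rewrite lt_min lp H // in_cons eqxx.
move=> x; rewrite in_cons => /orP[/eqP->|/Hl h]; rewrite ge_min ?lexx //.
by rewrite h orbT.
Qed.

Lemma seq_ub (s : seq R) : exists2 L, 0 < L & forall x, x \in s -> x <= L.
Proof.
elim: s => [|a s [L Lp HL]]; first by exists 1 => //; rewrite ltr01.
exists (Order.max a L).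
  by rewrite lt_max Lp orbT.
move=> x; rewrite in_cons => /orP[/eqP->|/HL h]; rewrite le_max ?lexx //.
by rewrite h orbT.
Qed.

Lemma metric_lb (T : finType) (d : T -> T -> R) : is_metric d ->
  exists2 l, 0 < l & forall x y, x != y -> l <= d x y.
Proof.
case=> h0 h1 _ _.
set s := [seq d p.1 p.2 | p <- [seq p <- enum {: T * T} | p.1 != p.2]].
have Hs : forall v, v \in s -> 0 < v.
  move=> v /mapP[p]; rewrite mem_filter => /andP[np _] ->.
  rewrite lt_def h0 andbT; apply/eqP => /h1 e; by rewrite e eqxx in np.
have [l lp Hl] := seq_lb Hs.
exists l => // x y nxy; apply: Hl; apply/mapP; exists (x, y) => //.
by rewrite mem_filter mem_enum nxy.
Qed.

Lemma metric_ub (T : finType) (d : T -> T -> R) :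
  exists2 L, 0 < L & forall x y, d x y <= L.
Proof.
have [L Lp HL] := seq_ub [seq d p.1 p.2 | p <- enum {: T * T}].
exists L => // x y; apply: HL; apply/mapP; exists (x, y) => //.
by rewrite mem_enum.
Qed.

Lemma pb_in (T : finType) (P : {set {set T}}) x :
  partition P [set: T] -> x \in pblock P x.
Proof. by move=> /and3P[/eqP cov _ _]; rewrite mem_pblock cov inE. Qed.

Lemma pb_mem (T : finType) (P : {set {set T}}) x :
  partition P [set: T] -> pblock P x \in P.
Proof. by move=> /and3P[/eqP cov _ _]; rewrite pblock_mem // cov inE. Qed.

Lemma pb_sym (T : finType) (P : {set {set T}}) x y :
  partition P [set: T] -> y \in pblock P x -> x \in pblock P y.
Proof.
move=> hP hy; case/and3P: (hP) => _ tI _.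
by rewrite (same_pblock tI hy) pb_in.
Qed.

Lemma part_single (T : finType) (P : {set {set T}}) :
  partition P [set: T] -> (forall x y, y \in pblock P x -> x = y) ->
  P = singletons_part T.
Proof.
move=> hP H.
have pbs x : pblock P x = [set x].
  apply/setP=> y; rewrite inE; apply/idP/eqP => [/H -> //|->]; exact: pb_in.
case/and3P: (hP) => _ tI n0.
apply/setP => B; apply/idP/imsetP.
- move=> BP; have : B != set0 by apply: contraNneq n0 => <-.
  case/set0Pn => x xB; exists x => //.
  by rewrite -pbs (def_pblock tI BP xB).
- by case=> x _ ->; rewrite -pbs; apply: pb_mem.
Qed.

Lemma part_one (T : finType) (P : {set {set T}}) (x0 : T) :
  partition P [set: T] -> (forall x y, y \in pblock P x) ->
  P = one_block_part T.
Proof.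
move=> hP H.
have pbs x : pblock P x = [set: T] by apply/setP=> y; rewrite inE H.
case/and3P: (hP) => _ tI n0.
apply/setP => B; rewrite inE; apply/idP/eqP.
- move=> BP; have : B != set0 by apply: contraNneq n0 => <-.
  case/set0Pn => x xB.
  by rewrite -(pbs x) (def_pblock tI BP xB).
- by move=> ->; rewrite -(pbs x0); apply: pb_mem.
Qed.

Lemma transfer (C : clustering_rule R) (X Y : finType) dX dY (f : X -> Y) :
  clustering_functor C -> is_metric dX -> is_metric dY ->
  inj_morphism dX dY f ->
  forall x y, y \in pblock (C X dX) x -> f y \in pblock (C Y dY) (f x).
Proof.
move=> [hp hr] mX mY mf x y hy.
have PX := hp X dX mX; have PY := hp Y dY mY.
case: (hr X Y dX dY f mX mY mf _ (pb_mem x PX)) => B.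
rewrite /pullback_part in_setD1 => /andP[_ /imsetP[B' B'P ->]] sub.
have fx : f x \in B'.
  by move/subsetP: sub => /(_ x (pb_in x PX)); rewrite inE.
have fy : f y \in B'.
  by move/subsetP: sub => /(_ y hy); rewrite inE.
case/and3P: PY => _ tI _.
by rewrite (def_pblock tI B'P fx).
Qed.

Variable C : clustering_rule R.
Arguments C : clear implicits.
Hypothesis hC : clustering_functor C.
Hypothesis hS : scale_invariant C.

Definition Rel n (a b : 'I_n) := b \in pblock (C 'I_n (@Delta R n 1)) a.

Lemma partC (T : finType) d : is_metric d -> partition (C T d) [set: T].
Proof. by case: hC => hp _; apply: hp. Qed.

Lemma rel_perm n (s : {perm 'I_n}) a b : Rel a b -> Rel (s a) (s b).
Proof.
apply: (transfer hC (metric_Delta n) (metric_Delta n)).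
split; first exact: perm_inj.
by move=> x y; rewrite /Delta (inj_eq perm_inj).
Qed.

Lemma dich n (a b : 'I_n) : a != b -> Rel a b -> forall c e : 'I_n, Rel c e.
Proof.
have hp := partC (metric_Delta n).
move=> nab hab c e; case: (c =P e) => [<-|nce]; first exact: pb_in.
case: (b =P c) => [ebc|nbc].
- subst c; have hba := pb_sym hp hab.
  case: (e =P a) => [->//|nea].
  have := rel_perm (tperm a e) hba; rewrite tpermL tpermD //.
  by rewrite eq_sym; apply/eqP => h; apply: nce; rewrite h.
- have hcb : Rel c b.
    have := rel_perm (tperm a c) hab; rewrite tpermL tpermD //.
    by rewrite eq_sym; apply/eqP.
  have := rel_perm (tperm b e) hcb; rewrite tpermL tpermD //.
    by apply/eqP.
  by rewrite eq_sym; apply/eqP.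
Qed.

Lemma inK_full n : inK C n -> forall a b : 'I_n, Rel a b.
Proof.
case=> _ h a b; rewrite /Rel h.
by rewrite (def_pblock (trivIset1 _) (set11 _) (in_setT a)) inE.
Qed.

Lemma full_inK n : (2 <= n)%N -> (forall a b : 'I_n, Rel a b) -> inK C n.
Proof.
move=> h2 H; split => //.
exact: (part_one (Ordinal (leq_trans (isT : (1 <= 2)%N) h2))
                 (partC (metric_Delta n)) H).
Qed.

Lemma up j n : inK C j -> (j <= n)%N -> forall a b : 'I_n, Rel a b.
Proof.
move=> hj jn; have j2 := hj.1.
pose a0 : 'I_j := Ordinal (leq_trans (isT : (1 <= 2)%N) j2).
pose b0 : 'I_j := Ordinal j2.
apply: (@dich n (widen_ord jn a0) (widen_ord jn b0)) => //.
have winj : injective (widen_ord jn).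
  by move=> u v /(congr1 val) /= /val_inj.
apply: (transfer hC (metric_Delta j) (metric_Delta n) _ (inK_full hj a0 b0)).
split => // x y; by rewrite /Delta (inj_eq winj).
Qed.

Lemma to_rel (T : finType) d x y : is_metric d ->
  y \in pblock (C T d) x -> Rel (enum_rank x) (enum_rank y).
Proof.
move=> md h; have [l lp Hl] := metric_lb md.
rewrite /Rel -(hS (metric_Delta #|T|) lp).
apply: (transfer hC md (metric_scale (metric_Delta _) lp) _ h).
split; first exact: enum_rank_inj.
move=> u v; rewrite /Delta (inj_eq enum_rank_inj).
case: (u =P v) => [->|nuv]; rewrite ?mulr0 ?mulr1; first by case: md.
by apply: Hl; apply/eqP.
Qed.

Lemma from_rel (T : finType) d (a b : 'I_#|T|) : is_metric d ->
  Rel a b -> enum_val b \in pblock (C T d) (enum_val a).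
Proof.
move=> md h; have [L Lp HL] := metric_ub d.
rewrite /Rel -(hS (metric_Delta #|T|) Lp) in h.
apply: (transfer hC (metric_scale (metric_Delta _) Lp) md _ h).
split; first exact: enum_val_inj.
move=> u v; rewrite /Delta.
case: (u =P v) => [->|nuv]; rewrite ?mulr0 ?mulr1 //.
by case: md => _ h1 _ _; rewrite (proj2 (h1 _ _) erefl).
Qed.

Lemma full_case (T : finType) d (x0 : T) : is_metric d ->
  (forall a b : 'I_#|T|, Rel a b) -> C T d = one_block_part T.
Proof.
move=> md H; apply: (part_one x0 (partC md)) => x y.
by have := from_rel md (H (enum_rank x) (enum_rank y)); rewrite !enum_rankK.
Qed.

Lemma diag_case (T : finType) d : is_metric d ->
  (forall a b : 'I_#|T|, Rel a b -> a = b) -> C T d = singletons_part T.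
Proof.
move=> md H; apply: (part_single (partC md)) => x y /(to_rel md) /H.
exact: enum_rank_inj.
Qed.

Lemma dich_case n : (forall a b : 'I_n, Rel a b) \/ (forall a b : 'I_n, Rel a b -> a = b).
Proof.
case: (boolP [exists a : 'I_n, exists b : 'I_n, (a != b) && Rel a b]).
- case/existsP => a /existsP [b /andP[nab hab]]; left; exact: dich nab hab.
- rewrite negb_exists => /forallP H; right => a b hab; apply/eqP.
  move: (H a); rewrite negb_exists => /forallP /(_ b).
  by rewrite negb_and hab orbF negbK.
Qed.

End Helpers.

Theorem mainTheorem7 (R : realType) (C : clustering_rule R) :
  clustering_functor C -> scale_invariant C ->
  ((forall k, ~ inK C k) ->
     forall (T : finType) (d : T -> T -> R), is_metric d ->
       C T d = singletons_part T)
  /\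
  (forall kC : nat, inK C kC -> (forall j, inK C j -> (kC <= j)%N) ->
     (forall (T : finType) (d : T -> T -> R), is_metric d ->
        (kC <= #|T|)%N -> C T d = one_block_part T)
     /\
     (forall (T : finType) (d : T -> T -> R), is_metric d ->
        (2 <= #|T|)%N -> (#|T| < kC)%N -> C T d = singletons_part T)).
Proof.
move=> hC hS; split.
- move=> nK T d md; case: (leqP 2 #|T|) => [h2|hlt].
  + case: (dich_case hC #|T|) => [H|H]; last exact: diag_case.
    by exfalso; apply: (nK #|T|); apply: full_inK.
  + apply: (part_single (partC hC md)) => x y _.
    by move/card_le1_eqP: hlt; apply; rewrite inE.
- move=> kC hk hmin; split.
  + move=> T d md hle.
    have h0 : (0 < #|T|)%N by apply: leq_trans hle; apply: leq_trans hk.1.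
    exact: (full_case hC hS (enum_val (Ordinal h0)) md (up hC hk hle)).
  + move=> T d md h2 hlt.
    case: (dich_case hC #|T|) => [H|H]; last exact: diag_case.
    have := hmin _ (full_inK hC h2 H); by rewrite leqNgt hlt.
Qed.
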